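(* Let $n\geq 2$, $\lambda>n$, $\mu>n$, and $h(x,y)=(\lambda x,\mu y)$. Let $f:\mathbb{R}^2\to\mathbb{R}^2$ be an orientation preserving homeomorphism with bounded displacement (there is $K>0$ with $|f(p)-p|\leq K$ for all $p$) such that $hfh^{-1}=f^n$. Then $f=\mathrm{id}$. *)

(* Defs.v *)
From Stdlib Require Import Reals.
Open Scope R_scope.

Definition pt := (R * R)%type.

Definition dist2 (p q : pt) : R :=
  sqrt ((fst p - fst q) ^ 2 + (snd p - snd q) ^ 2).

Definition cont2 (f : pt -> pt) : Prop :=
  forall p eps, 0 < eps -> exists delta, 0 < delta /\
    forall q, dist2 q p < delta -> dist2 (f q) (f p) < eps.

Definition homeo2 (f : pt -> pt) : Prop :=
  cont2 f /\ exists g : pt -> pt, cont2 g /\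
    (forall p, g (f p) = p) /\ (forall p, f (g p) = p).

(* Orientation preserving (degree +1): for every point p and radius r > 0,
   the image under f of the positively oriented circle of radius r about p
   winds exactly once, positively, around f p; i.e. the loop
   t |-> f(p + r(cos 2πt, sin 2πt)) - f p, t in [0,1], admits a continuous
   polar lift (rho, theta), rho > 0, with theta 1 - theta 0 = 2π. *)
Definition orientation_preserving (f : pt -> pt) : Prop :=
  forall (p : pt) (r : R), 0 < r ->
    exists (rho theta : R -> R),
      (forall t, 0 <= t <= 1 -> continuity_pt theta t) /\
      (forall t, 0 <= t <= 1 ->
         0 < rho t /\
         let q := f (fst p + r * cos (2 * PI * t), snd p + r * sin (2 * PI * t)) in
         fst q - fst (f p) = rho t * cos (theta t) /\
         snd q - snd (f p) = rho t * sin (theta t)) /\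
      theta 1 - theta 0 = 2 * PI.

Fixpoint iter (n : nat) (f : pt -> pt) (p : pt) : pt :=
  match n with O => p | S k => f (iter k f p) end.

Definition hmap (lam mu : R) (p : pt) : pt := (lam * fst p, mu * snd p).
Definition hinv (lam mu : R) (p : pt) : pt := (fst p / lam, snd p / mu).

(* Main.v *)
Require Import Defs.
From Stdlib Require Import Reals.
From Stdlib Require Import Lra.
Open Scope R_scope.

Lemma iter_disp (g : pt -> R) (f : pt -> pt) (B : R) :
  (forall q, Rabs (g (f q) - g q) <= B) ->
  forall m p, Rabs (g (iter m f p) - g p) <= INR m * B.
Proof.
  intros HB m p; induction m as [|m IH]; cbn [iter].
  - replace (g p - g p) with 0 by ring. rewrite Rabs_R0. simpl. lra.
  - rewrite S_INR.
    replace (g (f (iter m f p)) - g p) with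
      ((g (f (iter m f p)) - g (iter m f p)) + (g (iter m f p) - g p)) by ring.
    eapply Rle_trans; [apply Rabs_triang|]. specialize (HB (iter m f p)). lra.
Qed.

Lemma comp_fix (g : pt -> R) (H : pt -> pt) (s K : R) (n : nat) (f : pt -> pt) :
  INR n < s -> 0 < K -> (forall q, Rabs (g (f q) - g q) <= K) ->
  (forall q, g (H q) = s * g q) ->
  (forall q, s * g (f q) = g (iter n f (H q))) -> forall p, g (f p) = g p.
Proof.
  intros Hs HK HB HH Hf p.
  assert (Hn : 0 <= INR n) by apply pos_INR.
  assert (Hs0 : 0 < s) by lra.
  set (c := INR n / s).
  assert (Hc0 : 0 <= c) by (unfold c; apply Rmult_le_pos; [lra| left; apply Rinv_0_lt_compat; lra]).
  assert (Hc1 : c < 1).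
  { unfold c. apply (Rmult_lt_reg_r s); [lra|]. field_simplify; lra. }
  assert (Cl : forall m q, Rabs (g (f q) - g q) <= K * c ^ m).
  { induction m as [|m IH]; intro q.
    - simpl. rewrite Rmult_1_r. apply HB.
    - assert (E : g (f q) - g q = (g (iter n f (H q)) - g (H q)) / s).
      { rewrite <- Hf, HH. field. lra. }
      rewrite E. unfold Rdiv. rewrite Rabs_mult, (Rabs_right (/ s)).
      2: { left; apply Rinv_0_lt_compat; lra. }
      assert (T := iter_disp g f (K * c ^ m) IH n (H q)).
      apply Rle_trans with (INR n * (K * c ^ m) * / s).
      + apply Rmult_le_compat_r; [left; apply Rinv_0_lt_compat; lra| exact T].
      + simpl. unfold c. right. field. lra. }
  destruct (Req_dec (g (f p) - g p) 0) as [E|E]; [lra|].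
  exfalso.
  assert (Hd : 0 < Rabs (g (f p) - g p)) by (apply Rabs_pos_lt; exact E).
  destruct (pow_lt_1_zero c ltac:(rewrite Rabs_right; lra) (Rabs (g (f p) - g p) / K))
    as [N HN].
  { apply Rdiv_lt_0_compat; lra. }
  specialize (HN N (Nat.le_refl N)). rewrite Rabs_right in HN.
  2: { apply Rle_ge, pow_le; lra. }
  specialize (Cl N p).
  assert (K * c ^ N < Rabs (g (f p) - g p)).
  { apply (Rmult_lt_compat_l K) in HN; [|lra].
    replace (K * (Rabs (g (f p) - g p) / K)) with (Rabs (g (f p) - g p)) in HN by (field; lra).
    exact HN. }
  lra.
Qed.

Lemma abs_le_dist_fst (p q : pt) : Rabs (fst p - fst q) <= dist2 p q.
Proof.
  unfold dist2. rewrite <- sqrt_Rsqr_abs. apply sqrt_le_1_alt.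
  unfold Rsqr. set (a := fst p - fst q). set (b := snd p - snd q).
  assert (0 <= b ^ 2) by (apply pow2_ge_0). simpl in *. lra.
Qed.

Lemma abs_le_dist_snd (p q : pt) : Rabs (snd p - snd q) <= dist2 p q.
Proof.
  unfold dist2. rewrite <- sqrt_Rsqr_abs. apply sqrt_le_1_alt.
  unfold Rsqr. set (a := fst p - fst q). set (b := snd p - snd q).
  assert (0 <= a ^ 2) by (apply pow2_ge_0). simpl in *. lra.
Qed.

Theorem lemma3p3 (n : nat) (lam mu : R) (f : pt -> pt) :
  (2 <= n)%nat -> INR n < lam -> INR n < mu ->
  homeo2 f -> orientation_preserving f ->
  (exists K, 0 < K /\ forall p, dist2 (f p) p <= K) ->
  (forall p, hmap lam mu (f (hinv lam mu p)) = iter n f p) ->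
  forall p, f p = p.
Proof.
  intros _ Hl Hm _ _ [K [HK HD]] Hc p.
  assert (Hn : 0 <= INR n) by apply pos_INR.
  assert (Hinv : forall q, hinv lam mu (hmap lam mu q) = q).
  { intros [a b]. unfold hinv, hmap; simpl. f_equal; field; lra. }
  assert (Hf : forall q, hmap lam mu (f q) = iter n f (hmap lam mu q)).
  { intro q. rewrite <- Hc, Hinv. reflexivity. }
  assert (E1 : fst (f p) = fst p).
  { apply (comp_fix fst (hmap lam mu) lam K n f); auto.
    - intro q. eapply Rle_trans; [apply abs_le_dist_fst|apply HD].
    - intro q. rewrite <- Hf. reflexivity. }
  assert (E2 : snd (f p) = snd p).
  { apply (comp_fix snd (hmap lam mu) mu K n f); auto.
    - intro q. eapply Rle_trans; [apply abs_le_dist_snd|apply HD].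
    - intro q. rewrite <- Hf. reflexivity. }
  destruct (f p) as [a b], p as [x y]; simpl in *; subst; reflexivity.
Qed.
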